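(* Let $T,T'$ be one-to-one reduced linear trellises of the same length and let $f:T\to T'$ be an isomorphism of trellises. Then every $f_i:V_i(T)\to V_i(T')$ is linear, i.e. $f$ is a linear isomorphism. In particular, on a one-to-one reduced trellis there is exactly one vector space structure on each vertex set making it linear, up to the given labels (two such structures are related by the identity being a linear isomorphism).
   Context: Let $\mathbb{F}$ be a finite field and $n\ge1$; indices are taken in $\mathbb{Z}_n$. A trellis $T$ of length $n$ over $\mathbb{F}$ consists of pairwise disjoint finite vertex sets $V_i(T)$, $i\in\mathbb{Z}_n$, and edge sets $E_i(T)\subseteq V_i(T)\times\mathbb{F}\times V_{i+1}(T)$; $(v,\alpha,w)\in E_i(T)$ is an edge from $v$ to $w$ with label $\alpha$. Trellises are trim. $T$ is linear if each $V_i(T)$ is an $\mathbb{F}$-vector space and each $E_i(T)$ is a subspace. A cycle is a closed path of length $n$ starting in $V_0(T)$, identified with $(\mathbf{v},\boldsymbol{\alpha})\in\prod_iV_i(T)\times\mathbb{F}^n$; $\mathbb{S}(T)$ is the set of cycles, $L(\mathbf{v},\boldsymbol{\alpha})=\boldsymbol{\alpha}$, $C(T)=L(\mathbb{S}(T))$. $T$ is reduced if every edge lies on a cycle and one-to-one if $L:\mathbb{S}(T)\to C(T)$ is injective. An isomorphism $f:T\to T'$ is a family of bijections $f_i:V_i(T)\to V_i(T')$ with $(v,\alpha,w)\in E_i(T)\iff(f_i(v),\alpha,f_{i+1}(w))\in E_i(T')$. *)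

(* Defs.v *)
From HB Require Import structures.
From mathcomp Require Import all_boot all_order all_algebra.
Set Implicit Arguments. Unset Strict Implicit. Unset Printing Implicit Defensive.
Import GRing.Theory.
Local Open Scope ring_scope.

(* Indices i in Z_n are represented by 'I_n; i+1 is the cyclic successor ordS i. *)

Record linTrellis (F : finFieldType) (n : nat) := LinTrellis {
  V : 'I_n -> finLmodType F;
  E : forall i : 'I_n, V i -> F -> V (ordS i) -> Prop;
  E_zero : forall i : 'I_n, @E i (0 : V i) 0 (0 : V (ordS i));
  E_lin : forall (i : 'I_n) (a : F) v al w v' al' w',
      @E i v al w -> @E i v' al' w' -> @E i (a *: v + v') (a * al + al') (a *: w + w')
}.

Section TrellisNotions.
Variables (F : finFieldType) (n : nat) (T : linTrellis F n).

Definition trim : Prop :=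
  forall i : 'I_n,
    (forall x : V T i, exists al (w : V T (ordS i)), E x al w) /\
    (forall w : V T (ordS i), exists (x : V T i) al, E x al w).
(* since ordS is a bijection of Z_n, the second clause says every vertex
   of every V_j has an incoming edge *)

Definition is_cycle (v : forall i : 'I_n, V T i) (al : 'I_n -> F) : Prop :=
  forall i : 'I_n, E (v i) (al i) (v (ordS i)).

Definition reduced : Prop :=
  forall (i : 'I_n) (x : V T i) (a : F) (y : V T (ordS i)), E x a y ->
    exists v al, is_cycle v al /\ v i = x /\ al i = a /\ v (ordS i) = y.

(* one-to-one: the label map L : S(T) -> C(T) is injective *)
Definition one_to_one : Prop :=
  forall v v' al al', is_cycle v al -> is_cycle v' al' ->
    (forall i, al i = al' i) -> forall i, v i = v' i.

End TrellisNotions.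

(* an isomorphism of trellises (as plain trellises: no linearity required) *)
Definition trellis_iso (F : finFieldType) (n : nat) (T T' : linTrellis F n)
    (f : forall i : 'I_n, V T i -> V T' i) : Prop :=
  (forall i, bijective (f i)) /\
  (forall (i : 'I_n) (x : V T i) (a : F) (y : V T (ordS i)),
      E x a y <-> E (f i x) a (f (ordS i) y)).

(* Main.v *)
Require Import Defs.
From HB Require Import structures.
From mathcomp Require Import all_boot all_order all_algebra.
Local Open Scope ring_scope.

Lemma cycle_through (F : finFieldType) (n : nat) (T : linTrellis F n)
  (trimT : trim T) (redT : reduced T) (i : 'I_n) (x : V T i) :
  exists v al, is_cycle v al /\ v i = x.
Proof.
have [al [w e]] := (trimT i).1 x.
have [v [al' [cv [vi _]]]] := redT i x al w e.
by exists v, al'.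
Qed.

Theorem mainTheorem7 (F : finFieldType) (n : nat) (hn : (0 < n)%N)
    (T T' : linTrellis F n)
    (trimT : trim T) (trimT' : trim T')
    (redT : reduced T) (redT' : reduced T')
    (ooT : one_to_one T) (ooT' : one_to_one T')
    (f : forall i : 'I_n, V T i -> V T' i)
    (hf : trellis_iso f) :
  forall i : 'I_n, linear (f i).
Proof.
move=> i a x y /=.
have [v [al [cv vi]]] := @cycle_through F n T trimT redT i x.
have [v' [al' [cv' vi']]] := @cycle_through F n T trimT redT i y.
have [_ hE] := hf.
pose w := fun j => a *: v j + v' j.
pose bl := fun j => a * al j + al' j.
have cw : is_cycle w bl by move=> j; apply: E_lin.
have cfw : is_cycle (fun j => f j (w j)) bl by move=> j; apply/hE.
have cfv : is_cycle (fun j => f j (v j)) al by move=> j; apply/hE.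
have cfv' : is_cycle (fun j => f j (v' j)) al' by move=> j; apply/hE.
have cg : is_cycle (fun j => a *: f j (v j) + f j (v' j)) bl
  by move=> j; apply: E_lin.
have := ooT' _ _ _ _ cfw cg (fun _ => erefl) i.
by rewrite /w vi vi'.
Qed.
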